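(* Let $a,d$ be real numbers and let $A_{n,k}(a,d)$ be the general Eulerian numbers defined below. Then for every integer $n\ge 0$ and every integer $k$ with $-1\le k\le n-1$, $$A_{n,k}(a,d)=\sum_{i=0}^{k+1}(-1)^i\big[(k+2-i)d-a\big]^n\binom{n+1}{i}.$$
   Context: For real numbers $a,d$, the general Eulerian numbers $A_{n,k}(a,d)$ (integers $n\ge 0$, $k$) are defined by $A_{0,-1}(a,d)=1$, $A_{n,k}(a,d)=0$ whenever $k\ge n$ or $k\le -2$ (in particular $A_{0,k}=0$ for $k\neq -1$), and for $n\ge 1$, $-1\le k\le n-1$: $$A_{n,k}(a,d)=(-a+(k+2)d)A_{n-1,k}(a,d)+(a+(n-k-1)d)A_{n-1,k-1}(a,d).$$ Here $x^0=1$ for all $x$ (including $x=0$). *)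

(* Defs.v *)
From Stdlib Require Import Reals ZArith.
Open Scope R_scope.

Fixpoint genEuler (a d : R) (n : nat) (k : Z) : R :=
  match n with
  | O => if Z.eqb k (-1) then 1 else 0
  | S m =>
      if orb (Z.leb (Z.of_nat (S m)) k) (Z.leb k (-2)) then 0
      else (- a + IZR (k + 2) * d) * genEuler a d m k
           + (a + IZR (Z.of_nat (S m) - k - 1) * d) * genEuler a d m (k - 1)
  end.

Fixpoint sum_upto (f : nat -> R) (N : nat) : R :=
  match N with
  | O => f O
  | S N' => sum_upto f N' + f N
  end.

(* Main.v *)
Require Import Defs.
From Stdlib Require Import Reals ZArith Lia Lra Psatz.
Open Scope R_scope.

Definition Cb (n i : nat) : R := if Nat.leb i n then Binomial.C n i else 0.

Lemma C_n_0' n : Binomial.C n 0 = 1.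
Proof. unfold Binomial.C. rewrite Nat.sub_0_r. simpl. field. apply INR_fact_neq_0. Qed.

Lemma C_n_n' n : Binomial.C n n = 1.
Proof. unfold Binomial.C. rewrite Nat.sub_diag. simpl. field. apply INR_fact_neq_0. Qed.

Lemma Cb0 n : Cb n 0 = 1.
Proof. unfold Cb. simpl. apply C_n_0'. Qed.

Lemma Cb_pascal n i : Cb (S n) (S i) = Cb n i + Cb n (S i).
Proof.
  unfold Cb. destruct (Nat.ltb_spec i n).
  - rewrite (proj2 (Nat.leb_le i n)) by lia.
    rewrite (proj2 (Nat.leb_le (S i) n)) by lia.
    rewrite (proj2 (Nat.leb_le (S i) (S n))) by lia.
    symmetry; apply Binomial.pascal; lia.
  - destruct (Nat.eq_dec i n).
    + subst. rewrite Nat.leb_refl. rewrite Nat.leb_refl.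
      rewrite (proj2 (Nat.leb_gt (S n) n)) by lia. rewrite !C_n_n'. ring.
    + rewrite (proj2 (Nat.leb_gt i n)) by lia.
      rewrite (proj2 (Nat.leb_gt (S i) n)) by lia.
      rewrite (proj2 (Nat.leb_gt (S i) (S n))) by lia. ring.
Qed.

Lemma Cb_ratio n i : (INR i + 1) * Cb n (S i) = (INR n - INR i) * Cb n i.
Proof.
  unfold Cb. destruct (Nat.ltb_spec i n).
  - rewrite (proj2 (Nat.leb_le i n)) by lia.
    rewrite (proj2 (Nat.leb_le (S i) n)) by lia.
    rewrite Binomial.pascal_step3 by lia. rewrite minus_INR by lia.
    rewrite S_INR. field. pose proof (pos_INR i). lra.
  - destruct (Nat.eq_dec i n).
    + subst. rewrite (proj2 (Nat.leb_gt (S n) n)) by lia. ring.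
    + rewrite (proj2 (Nat.leb_gt i n)) by lia.
      rewrite (proj2 (Nat.leb_gt (S i) n)) by lia. ring.
Qed.

Definition xx (a d : R) (K i : nat) : R := (INR (K + 1) - INR i) * d - a.

Definition Fb (a d : R) (n K : nat) : R :=
  sum_upto (fun i => (-1) ^ i * xx a d K i ^ n * Cb (S n) i) K.

Lemma term0 a d m K :
  (-1) ^ 0 * xx a d K 0 ^ S m * Cb (S (S m)) 0 =
  xx a d K 0 * ((-1) ^ 0 * xx a d K 0 ^ m * Cb (S m) 0).
Proof. rewrite !Cb0. simpl. ring. Qed.

Lemma termS a d m K' i :
  (-1) ^ S i * xx a d (S K') (S i) ^ S m * Cb (S (S m)) (S i) =
  xx a d (S K') 0 * ((-1) ^ S i * xx a d (S K') (S i) ^ m * Cb (S m) (S i))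
  + (a + (INR (S m) - INR (S K')) * d) * ((-1) ^ i * xx a d K' i ^ m * Cb (S m) i).
Proof.
  assert (Ex : xx a d K' i = xx a d (S K') (S i)).
  { unfold xx. rewrite !plus_INR, !S_INR. simpl. ring. }
  assert (E0 : xx a d (S K') 0 = xx a d (S K') (S i) + (INR i + 1) * d).
  { unfold xx. rewrite !plus_INR, !S_INR. simpl. ring. }
  assert (Ec : xx a d (S K') (S i) + (a + (INR (S m) - INR (S K')) * d)
               = (INR (S m) - INR i) * d).
  { unfold xx. rewrite !plus_INR, !S_INR. simpl. ring. }
  rewrite Ex, E0, Cb_pascal.
  pose proof (Cb_ratio (S m) i) as HR.
  set (X := xx a d (S K') (S i)) in *.
  set (A := Cb (S m) i) in *. set (B := Cb (S m) (S i)) in *.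
  set (c := a + (INR (S m) - INR (S K')) * d) in *.
  set (s := (-1) ^ i). set (P := X ^ m).
  replace ((-1) ^ S i) with (- s) by (unfold s; simpl; ring).
  replace (X ^ S m) with (X * P) by (unfold P; simpl; ring).
  transitivity (- s * (X * P) * (A + B) - s * P * d * ((INR i + 1) * B - (INR (S m) - INR i) * A)).
  { rewrite HR. ring. }
  replace c with ((INR (S m) - INR i) * d - X) by lra. ring.
Qed.

Lemma Fb_rec a d m K' :
  Fb a d (S m) (S K') = xx a d (S K') 0 * Fb a d m (S K')
    + (a + (INR (S m) - INR (S K')) * d) * Fb a d m K'.
Proof.
  unfold Fb.
  assert (G : forall N,
    sum_upto (fun i => (-1) ^ i * xx a d (S K') i ^ S m * Cb (S (S m)) i) (S N) =
    xx a d (S K') 0 * sum_upto (fun i => (-1) ^ i * xx a d (S K') i ^ m * Cb (S m) i) (S N)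
    + (a + (INR (S m) - INR (S K')) * d) *
      sum_upto (fun i => (-1) ^ i * xx a d K' i ^ m * Cb (S m) i) N).
  { induction N.
    - change (sum_upto ?f 1) with (f 0%nat + f 1%nat). change (sum_upto ?f 0) with (f 0%nat). cbv beta. rewrite term0, termS. ring.
    - change (sum_upto ?f (S (S N))) with (sum_upto f (S N) + f (S (S N))).
      change (sum_upto ?f (S N)) with (sum_upto f N + f (S N)) at 3.
      rewrite IHN, termS. ring. }
  apply G.
Qed.

Lemma sum_upto_ext f g N : (forall i, (i <= N)%nat -> f i = g i) -> sum_upto f N = sum_upto g N.
Proof.
  induction N; intros H; simpl.
  - apply H; lia.
  - rewrite IHN by (intros; apply H; lia). rewrite H by lia. reflexivity.
Qed.

Lemma Fb_vanish a d n : forall K, (S n <= K)%nat -> Fb a d n K = 0.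
Proof.
  induction n; intros K HK.
  - unfold Fb. generalize (xx a d K) as f. induction K as [|K IH]; intros f; [lia|].
    destruct K.
    + simpl. rewrite Cb0. unfold Cb. simpl. rewrite C_n_n'. ring.
    + change (sum_upto ?f (S (S K))) with (sum_upto f (S K) + f (S (S K))).
      rewrite IH by lia. unfold Cb. simpl. ring.
  - destruct K as [|K']; [lia|].
    rewrite Fb_rec. rewrite !IHn by lia. ring.
Qed.

Lemma genEuler_neg a d n k : (k <= -2)%Z -> genEuler a d n k = 0.
Proof.
  intros H. destruct n; simpl.
  - destruct (Z.eqb_spec k (-1)); [lia|reflexivity].
  - rewrite (proj2 (Z.leb_le k (-2))) by lia. rewrite Bool.orb_true_r. reflexivity.
Qed.

Lemma genEuler_big a d n k : (Z.of_nat n <= k)%Z -> genEuler a d n k = 0.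
Proof.
  intros H. destruct n; simpl.
  - destruct (Z.eqb_spec k (-1)); [lia|reflexivity].
  - rewrite (proj2 (Z.leb_le (Z.pos (Pos.of_succ_nat n)) k)) by lia. reflexivity.
Qed.

Lemma main a d n : forall K, (K <= n)%nat -> genEuler a d n (Z.of_nat K - 1) = Fb a d n K.
Proof.
  induction n; intros K HK.
  - assert (K = 0%nat) by lia. subst. simpl. unfold Fb. simpl. rewrite Cb0. ring.
  - cbn [genEuler].
    rewrite (proj2 (Z.leb_gt (Z.of_nat (S n)) (Z.of_nat K - 1))) by lia.
    rewrite (proj2 (Z.leb_gt (Z.of_nat K - 1) (-2))) by lia. simpl orb. cbv iota.
    replace (IZR (Z.of_nat K - 1 + 2)) with (INR (K + 1))
      by (rewrite INR_IZR_INZ; f_equal; lia).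
    replace (IZR (Z.of_nat (S n) - (Z.of_nat K - 1) - 1)) with (INR (S n) - INR K)
      by (rewrite !INR_IZR_INZ, <- minus_IZR; f_equal; lia).
    destruct K as [|K'].
    + rewrite (genEuler_neg a d n (Z.of_nat 0 - 1 - 1)) by lia.
      rewrite IHn by lia. unfold Fb. simpl sum_upto. rewrite !Cb0. unfold xx. simpl INR. replace (0+1) with 1 by ring. simpl. ring.
    + replace (Z.of_nat (S K') - 1 - 1)%Z with (Z.of_nat K' - 1)%Z by lia.
      rewrite (IHn K') by lia.
      assert (Hk : genEuler a d n (Z.of_nat (S K') - 1) = Fb a d n (S K')).
      { destruct (Nat.leb_spec (S K') n).
        - apply IHn; lia.
        - rewrite genEuler_big by lia. rewrite Fb_vanish by lia. reflexivity. }
      rewrite Hk, Fb_rec. unfold xx at 1. simpl (INR 0). ring.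
Qed.

Theorem lemma2p5 (a d : R) (n : nat) (k : Z)
  (hk1 : (-1 <= k)%Z) (hk2 : (k <= Z.of_nat n - 1)%Z) :
  genEuler a d n k =
  sum_upto (fun i : nat =>
     (-1) ^ i * (IZR (k + 2 - Z.of_nat i) * d - a) ^ n * Binomial.C (S n) i)
     (Z.to_nat (k + 1)).
Proof.
  assert (HZ : Z.of_nat (Z.to_nat (k + 1)) = (k + 1)%Z) by (apply Z2Nat.id; lia).
  set (K := Z.to_nat (k + 1)) in *.
  assert (HK : (K <= n)%nat) by lia.
  assert (Hk : k = (Z.of_nat K - 1)%Z) by lia.
  clearbody K. subst k.
  rewrite main by lia. unfold Fb.
  apply sum_upto_ext. intros i Hi.
  unfold Cb. rewrite (proj2 (Nat.leb_le i (S n))) by lia.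
  unfold xx. f_equal. f_equal. f_equal.
  rewrite !INR_IZR_INZ, <- minus_IZR. do 3 f_equal. lia.
Qed.
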